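(* Let $\pi_1\in\mathcal{T}_k$ and $\pi_2\in\mathcal{T}_\ell$ be two-stack sortable permutations. Then $D(C_1(\pi_1,\pi_2))=(\pi_1,\pi_2)$, and $D(C_2(\pi_1,\pi_2,i))=(\pi_1,\pi_2)$ for every $1\le i\le\operatorname{slmax}(\pi_2)$.
   Context: For a finite sequence $A$ of distinct integers, the stack-sorting operator $\mathcal{S}$ is defined by $\mathcal{S}(\epsilon)=\epsilon$ for the empty sequence and, if $A$ is non-empty with largest element $m$, writing $A=A_L\cdot(m)\cdot A_R$ (concatenation), $\mathcal{S}(A)=\mathcal{S}(A_L)\cdot\mathcal{S}(A_R)\cdot(m)$. For $n\ge1$, $\mathcal{T}_n$ is the set of two-stack sortable permutations $\sigma\in\mathfrak{S}_n$, i.e. with $\mathcal{S}(\mathcal{S}(\sigma))$ the identity. For a sequence $A$ of distinct integers, $P(A)$ is the permutation with the same relative order as $A$. For a sequence $\tau$: $\tau^{+k}$ adds $k$ to each element; for $k_1<k_2$, $\tau^{+(k_1,m,k_2)}$ adds $k_1$ to elements strictly smaller than $m$ and $k_2$ to the others. $\operatorname{slmax}(\sigma)$ is the number of left-to-right maxima of $\mathcal{S}(\sigma)$; if $a_1,\dots,a_t$ are their values in order, define $C_1(\pi_1,\pi_2)=\pi_1\cdot(k+\ell+1)\cdot\pi_2^{+k}$ and $C_2(\pi_1,\pi_2,i)=\pi_1^{+(0,k,a_i)}\cdot(k+\ell+1)\cdot\pi_2^{+(k-1,a_i+1,k)}$ (with $a_i$ taken from $\mathcal{S}(\pi_2)$).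 For a permutation $\pi$ of length $n\ge1$ written $\pi=\pi_\ell\cdot(n)\cdot\pi_r$ (parts before and after the entry $n$), $D(\pi)=(P(\pi_\ell),P(\pi_r))$. *)

(* Defs.v *)
From mathcomp Require Import all_boot.
Set Implicit Arguments. Unset Strict Implicit. Unset Printing Implicit Defensive.

(* sigma is a permutation in S_n (one-line notation, values 1..n) *)
Definition is_perm (n : nat) (s : seq nat) : bool := perm_eq s (iota 1 n).

(* Stack-sorting operator S, defined as in the paper:
   S(eps) = eps, S(A_L . m . A_R) = S(A_L) . S(A_R) . m with m the largest entry.
   Fuel = size s suffices since both parts are strictly shorter. *)
Fixpoint ssort_aux (fuel : nat) (s : seq nat) : seq nat :=
  match fuel with
  | 0 => [::]
  | f.+1 =>
    if s is [::] then [::] else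
    let m := \max_(x <- s) x in
    let i := index m s in
    ssort_aux f (take i s) ++ ssort_aux f (drop i.+1 s) ++ [:: m]
  end.
Definition stack_sort (s : seq nat) : seq nat := ssort_aux (size s) s.

Definition two_stack_sortable (n : nat) (s : seq nat) : bool :=
  is_perm n s && (stack_sort (stack_sort s) == iota 1 n).

Definition std (s : seq nat) : seq nat :=
  [seq (count (fun y => y < x) s).+1 | x <- s].

Definition shift (k : nat) (t : seq nat) : seq nat := [seq x + k | x <- t].
Definition shift3 (k1 m k2 : nat) (t : seq nat) : seq nat :=
  [seq if x < m then x + k1 else x + k2 | x <- t].

(* values of the left-to-right maxima of a sequence (of positive entries), in order *)
Fixpoint lrmax_aux (cur : nat) (s : seq nat) : seq nat :=
  match s with
  | [::] => [::]
  | x :: t => if cur < x then x :: lrmax_aux x t else lrmax_aux cur t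
  end.
Definition lrmax (s : seq nat) : seq nat := lrmax_aux 0 s.

Definition slmax (s : seq nat) : nat := size (lrmax (stack_sort s)).
(* a_i (1-based) for S(sigma) *)
Definition slmax_val (s : seq nat) (i : nat) : nat := nth 0 (lrmax (stack_sort s)) i.-1.

Definition C1 (k l : nat) (p1 p2 : seq nat) : seq nat :=
  p1 ++ [:: k + l + 1] ++ shift k p2.
Definition C2 (k l : nat) (p1 p2 : seq nat) (i : nat) : seq nat :=
  let a := slmax_val p2 i in
  shift3 0 k a p1 ++ [:: k + l + 1] ++ shift3 k.-1 a.+1 k p2.

Definition D (p : seq nat) : seq nat * seq nat :=
  let n := size p in
  let i := index n p in
  (std (take i p), std (drop i.+1 p)).

(* Main.v *)
Require Import Defs.
From mathcomp Require Import all_boot.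
From mathcomp Require Import zify.

Lemma ssort_bound B f s : all (fun x => x <= B) s -> all (fun x => x <= B) (ssort_aux f s).
Proof.
elim: f s => [|f IH] [|y s] //= Hs.
have Hs' : forall x, x \in y :: s -> x <= B by apply/allP.
rewrite !all_cat /= andbT; apply/and3P; split.
- apply: IH; apply/allP => x /mem_take; exact: Hs'.
- apply: IH; apply/allP => x /mem_drop Hx; apply: Hs'; by rewrite inE Hx orbT.
- apply/bigmax_leqP_seq => i Hi _; exact: Hs'.
Qed.

Lemma lrmax_sub cur s : {subset lrmax_aux cur s <= s}.
Proof.
elim: s cur => [|y s IH] cur //= x.
case: ifP => _.
- rewrite !inE => /orP [->//|/IH ->]; by rewrite orbT.
- by move/IH; rewrite inE => ->; rewrite orbT.
Qed.

Lemma std_mono f s : {mono f : x y / x < y} -> std (map f s) = std s.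
Proof.
move=> Hf; rewrite /std -map_comp; apply: eq_map => x /=.
by rewrite count_map; congr S; apply: eq_count => y /=; rewrite Hf.
Qed.

Lemma count_iota x m n : count (fun y => y < x) (iota m n) = minn (x - m) n.
Proof.
elim: n m => [|n IH] m /=; first by lia.
rewrite IH; case: (ltnP m x) => H /=; lia.
Qed.

Lemma std_perm n s : is_perm n s -> std s = s.
Proof.
rewrite /is_perm => Hp0; rewrite /std; apply: map_id_in => x Hx.
have := Hx; rewrite (perm_mem Hp0) mem_iota => Hr.
move/permP: Hp0 => Hp; rewrite Hp count_iota; lia.
Qed.

Lemma D_split A B n : all (fun x => x < n) A -> size A + (size B).+1 = n ->
  D (A ++ [:: n] ++ B) = (std A, std B).
Proof.
move=> HA Hs; rewrite /D size_cat /= Hs.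
have nA : n \notin A by apply/negP => /(allP HA); rewrite ltnn.
rewrite index_cat (negbTE nA) /= eqxx addn0 take_size_cat //.
by rewrite drop_cat ltnNge leqnSn /= subSn // subnn drop1.
Qed.

Lemma mono_shift3 k1 m k2 : k1 <= k2 ->
  {mono (fun x => if x < m then x + k1 else x + k2) : x y / x < y}.
Proof.
move=> Hk x y /=; case: (ltnP x m) => Hx; case: (ltnP y m) => Hy;
  apply/idP/idP; lia.
Qed.

Lemma mono_shift k : {mono (fun x => x + k) : x y / x < y}.
Proof. by move=> x y; rewrite ltn_add2r. Qed.

Theorem proposition7 (k l : nat) (p1 p2 : seq nat) :
  0 < k -> 0 < l ->
  two_stack_sortable k p1 -> two_stack_sortable l p2 ->
  D (C1 k l p1 p2) = (p1, p2) /\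
  (forall i : nat, 1 <= i <= slmax p2 -> D (C2 k l p1 p2 i) = (p1, p2)).
Proof.
move=> Hk Hl /andP [H1 _] /andP [H2 _].
have S1 : size p1 = k by rewrite (perm_size H1) size_iota.
have S2 : size p2 = l by rewrite (perm_size H2) size_iota.
have M1 : forall x, x \in p1 -> 0 < x <= k.
  by move=> x; rewrite (perm_mem H1) mem_iota; lia.
have M2 : forall x, x \in p2 -> 0 < x <= l.
  by move=> x; rewrite (perm_mem H2) mem_iota; lia.
split.
- rewrite /C1 D_split.
  + by rewrite /shift (std_mono _ _ (mono_shift k)) (std_perm _ _ H1) (std_perm _ _ H2).
  + apply/allP => x /M1; lia.
  + rewrite /shift size_map; lia.
- move=> i Hi; rewrite /C2.
  set a := slmax_val p2 i.
  have Ha : a <= l.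
    have : a \in stack_sort p2.
      apply: (@lrmax_sub 0); rewrite /a /slmax_val /lrmax.
      apply: mem_nth; move: Hi; rewrite /slmax /lrmax => /andP [h1 h2]; by rewrite -(prednK h1) in h2.
    have : all (fun x => x <= l) (stack_sort p2).
      apply: ssort_bound; apply/allP => x /M2; lia.
    by move/allP => H /H.
  rewrite D_split.
  + rewrite /shift3 (std_mono _ _ (@mono_shift3 _ _ _ (leq0n _))).
    rewrite (std_mono _ _ (@mono_shift3 _ _ _ (leq_pred k))).
    by rewrite (std_perm _ _ H1) (std_perm _ _ H2).
  + rewrite /shift3 all_map; apply/allP => x /M1 /= Hx.
    case: ifP => _; lia.
  + rewrite /shift3 !size_map; lia.
Qed.
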